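(* Let $R$ be a commutative ring with unit, $Q=(V,E,X,s,t,l)$ a labelled quiver, and let $f,g,h\in R\langle X\rangle$ be such that $f$ is compatible with $Q$, $g$ is uniformly compatible with $Q$, and $h$ can be obtained from $f$ by a rewriting step using $g$, i.e. $h=f+\lambda agb$ for some $\lambda\in R$ and $a,b\in\langle X\rangle$ with $a m_g b = m_f$ for some $m_g\in\operatorname{supp}(g)$, $m_f\in\operatorname{supp}(f)$. Then $h$ is compatible, $a$, $b$ and $agb$ are uniformly compatible with $Q$, and $\sigma(h)\supseteq\sigma(f)$ and $\sigma(agb)\supseteq\sigma(f)$. Moreover, if in addition $f$ is uniformly compatible, then $h$ is uniformly compatible and $\sigma(agb)=\sigma(f)$.
   Context: $R\langle X\rangle$ is the free algebra of noncommutative polynomials over $R$ in indeterminates $X$, with monomials the words in $\langle X\rangle$ (including the empty word $1$); $\operatorname{supp}(f)$ is the set of monomials with nonzero coefficient. A rewriting step: for $f,g$ such that some $m_g\in\operatorname{supp}(g)$ divides some $m_f\in\operatorname{supp}(f)$, i.e. $m_f=am_gb$ with $a,b\in\langle X\rangle$, and $\lambda\in R$, the polynomial $f+\lambda agb$ is obtained from $f$ by a rewriting step using $g$. A labelled quiver $Q=(V,E,X,s,t,l)$ has vertices $V$, edges $E$, source/target maps $s,t:E\to V$ and labelling $l:E\to X$. A nonempty path $p=e_n\cdots e_1$ (with $s(e_{i+1})=t(e_i)$) has label $l(e_n)\cdots l(e_1)$, source $s(e_1)$, target $t(e_n)$; each vertex $v$ has an empty path with label $1$ and source and target $v$. For a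 monomial $m$, $\sigma(m)=\{(s(p),t(p)) : p \text{ a path with } l(p)=m\}$; for a polynomial $f$, $\sigma(f)=\bigcap_{m\in\operatorname{supp}(f)}\sigma(m)$. $f$ is compatible with $Q$ if $\sigma(f)\neq\emptyset$, and uniformly compatible if it is compatible and all $m\in\operatorname{supp}(f)$ have the same set $\sigma(m)$. *)

(* Defs.v *)
From HB Require Import structures.
From mathcomp Require Import all_boot all_algebra.
Set Implicit Arguments. Unset Strict Implicit. Unset Printing Implicit Defensive.
Import GRing.Theory.
Local Open Scope ring_scope.

(* Noncommutative polynomials R<X>: finitely supported coefficient functions
   on words (monomials) seq X; the empty word [::] is the monomial 1. *)
Section FreeAlg.
Variables (R : comNzRingType) (X : eqType).

Definition finsupp_fun (c : seq X -> R) :=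
  exists s : seq (seq X), forall w, c w != 0 -> w \in s.

Definition ncpoly := { c : seq X -> R | finsupp_fun c }.

Definition coef (f : ncpoly) : seq X -> R := proj1_sig f.

Definition supp (f : ncpoly) (m : seq X) : Prop := coef f m != 0.

Lemma ncadd_fin (f g : ncpoly) : finsupp_fun (fun w => coef f w + coef g w).
Proof.
case: f => cf [sf Hf]; case: g => cg [sg Hg]; exists (sf ++ sg) => w /= Hw.
rewrite mem_cat; case: (boolP (cf w == 0)) => [/eqP H0|/Hf -> //].
by rewrite orbC Hg //; move: Hw; rewrite H0 add0r.
Qed.
Definition ncadd (f g : ncpoly) : ncpoly := exist _ _ (ncadd_fin f g).

Lemma ncscale_fin (lam : R) (f : ncpoly) : finsupp_fun (fun w => lam * coef f w).
Proof.
case: f => cf [sf Hf]; exists sf => w /= Hw; apply: Hf.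
by apply: contra Hw => /eqP ->; rewrite mulr0.
Qed.
Definition ncscale (lam : R) (f : ncpoly) : ncpoly := exist _ _ (ncscale_fin lam f).

Lemma ncmono_fin (m : seq X) : finsupp_fun (fun w => if w == m then 1 else 0).
Proof. exists [:: m] => w; rewrite inE; by case: (w == m); rewrite ?eqxx. Qed.
Definition ncmono (m : seq X) : ncpoly := exist _ _ (ncmono_fin m).

(* the product a * g * b of monomials a, b with the polynomial g:
   the coefficient of a word w is g u if w = a u b, and 0 otherwise. *)
Definition mid (a b w : seq X) : seq X :=
  take (size w - (size a + size b)) (drop (size a) w).

Definition sandwich_coef (a : seq X) (g : ncpoly) (b : seq X) (w : seq X) : R :=
  if w == a ++ mid a b w ++ b then coef g (mid a b w) else 0.

Lemma sandwich_fin a g b : finsupp_fun (sandwich_coef a g b).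
Proof.
case: g => cg [sg Hg]; exists (map (fun u => a ++ u ++ b) sg) => w.
rewrite /sandwich_coef /=; case: (w =P _) => [E|_]; last by rewrite eqxx.
by move=> /Hg H; rewrite E; apply: map_f.
Qed.
Definition sandwich a g b : ncpoly := exist _ _ (sandwich_fin a g b).

End FreeAlg.

Section Quiver.
Variables (V E : Type) (X : eqType) (s t : E -> V) (l : E -> X).

(* A nonempty path e_n ... e_1 (s(e_{i+1}) = t(e_i)) has label
   l(e_n) ... l(e_1), source s(e_1), target t(e_n); it is built by
   prepending (on the left) an edge e with s(e) = target of the previous path. *)
Inductive walk : seq X -> V -> V -> Prop :=
| walk_nil v : walk [::] v v
| walk_cons e m u : walk m u (s e) -> walk (l e :: m) u (t e).

Definition sigma_mono (m : seq X) (p : V * V) : Prop := walk m p.1 p.2.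

Variable R : comNzRingType.

Definition sigma (f : ncpoly R X) (p : V * V) : Prop :=
  forall m, supp f m -> sigma_mono m p.

Definition compatible (f : ncpoly R X) : Prop := exists p, sigma f p.

Definition unif_compatible (f : ncpoly R X) : Prop :=
  compatible f /\
  forall m1 m2, supp f m1 -> supp f m2 -> forall p, sigma_mono m1 p <-> sigma_mono m2 p.

End Quiver.

(* Main.v *)
Require Import Defs.
From mathcomp Require Import all_boot all_algebra.
From mathcomp Require Import zify.
Import GRing.Theory.
Local Open Scope ring_scope.

Section Aux.
Variables (V E : Type) (X : eqType) (s t : E -> V) (l : E -> X).

Lemma walk_cat_l (m1 m2 : seq X) u w :
  walk s t l (m1 ++ m2) u w -> exists v, walk s t l m2 u v /\ walk s t l m1 v w.
Proof.
elim: m1 w => [|x m1 IH] w /= H.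
  by exists w; split => //; constructor.
inversion H as [|e m u0 Hw E1 E2 E3]; subst.
have [v [H1 H2]] := IH _ Hw.
by exists v; split => //; constructor.
Qed.

Lemma walk_cat_r (m1 m2 : seq X) u v w :
  walk s t l m2 u v -> walk s t l m1 v w -> walk s t l (m1 ++ m2) u w.
Proof.
move=> H2 H1; elim: H1 H2 => [v' //|e m v' Hm IH H2] /=.
by constructor; apply: IH.
Qed.

Lemma walk_cat (m1 m2 : seq X) u w :
  walk s t l (m1 ++ m2) u w <-> exists v, walk s t l m2 u v /\ walk s t l m1 v w.
Proof.
split; first exact: walk_cat_l.
by move=> [v [H2 H1]]; apply: walk_cat_r H2 H1.
Qed.

Lemma mid_cat (a u b : seq X) : mid a b (a ++ u ++ b) = u.
Proof.
rewrite /mid drop_size_cat //.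
have -> : (size (a ++ u ++ b) - (size a + size b))%N = size u.
  rewrite !size_cat; lia.
by rewrite take_size_cat.
Qed.

Variable R : comNzRingType.

Lemma supp_sandwich (a b : seq X) (g : ncpoly R X) w :
  supp (sandwich a g b) w <-> exists u, w = a ++ u ++ b /\ supp g u.
Proof.
rewrite /supp /= /sandwich_coef; split.
  case: ifP => [/eqP Ew|_]; last by rewrite eqxx.
  by move=> H; exists (mid a b w).
move=> [u [-> Hu]]; rewrite mid_cat eqxx; exact: Hu.
Qed.

Lemma supp_mono (a w : seq X) : supp (ncmono R a) w <-> w = a.
Proof.
rewrite /supp /=; split; first by case: ifP => [/eqP|]; rewrite ?eqxx.
by move=> ->; rewrite eqxx oner_neq0.
Qed.

Lemma supp_add (f h : ncpoly R X) (lam : R) w :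
  supp (ncadd f (ncscale lam h)) w -> supp f w \/ supp h w.
Proof.
rewrite /supp /=; case: (boolP (coef f w == 0)) => [/eqP ->|]; last by left.
case: (boolP (coef h w == 0)) => [/eqP ->|]; last by right.
by rewrite mulr0 addr0 eqxx.
Qed.

End Aux.

Theorem lemma3p10 (R : comNzRingType) (V E : Type) (X : eqType)
  (s t : E -> V) (l : E -> X)
  (f g : ncpoly R X) (lam : R) (a b mg mf : seq X) :
  compatible s t l f ->
  unif_compatible s t l g ->
  supp g mg -> supp f mf -> a ++ mg ++ b = mf ->
  let agb := sandwich a g b in
  let h := ncadd f (ncscale lam agb) in
  (compatible s t l h /\
   unif_compatible s t l (ncmono R a) /\
   unif_compatible s t l (ncmono R b) /\
   unif_compatible s t l agb /\
   (forall p, sigma s t l f p -> sigma s t l h p) /\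
   (forall p, sigma s t l f p -> sigma s t l agb p)) /\
  (unif_compatible s t l f ->
     unif_compatible s t l h /\ (forall p, sigma s t l agb p <-> sigma s t l f p)).
Proof.
move=> [p0 Hp0] [_ Ug] Hmg Hmf Emf agb h.
have key : forall u, supp g u -> forall p,
    sigma_mono s t l (a ++ u ++ b) p <-> sigma_mono s t l mf p.
  move=> u Hu p; rewrite -Emf /sigma_mono.
  rewrite !walk_cat; split.
    move=> [v [Hv1 Hv2]]; move/walk_cat: Hv1 => [v' [Hb Hu']].
    exists v; split => //; apply/walk_cat; exists v'; split => //.
    exact: (proj1 (Ug _ _ Hu Hmg (v', v)) Hu').
  move=> [v [Hv1 Hv2]]; move/walk_cat: Hv1 => [v' [Hb Hu']].
  exists v; split => //; apply/walk_cat; exists v'; split => //.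
  exact: (proj2 (Ug _ _ Hu Hmg (v', v)) Hu').
have sagb : forall p, sigma s t l f p -> sigma s t l agb p.
  move=> p Hp w /supp_sandwich [u [-> Hu]].
  by apply/(key u Hu); apply: Hp.
have sh : forall p, sigma s t l f p -> sigma s t l h p.
  move=> p Hp w /supp_add [Hw|Hw]; first exact: Hp.
  exact: sagb.
have Wmf := Hp0 _ Hmf.
have mono_unif : forall c, (exists p, sigma_mono s t l c p) ->
    unif_compatible s t l (ncmono R c).
  move=> c [p Hc]; split.
    by exists p => w /supp_mono ->.
  by move=> m1 m2 /supp_mono -> /supp_mono ->.
split.
  split; first by exists p0; apply: sh.
  split.
    apply: mono_unif; move: Wmf; rewrite /sigma_mono -Emf.
    move/walk_cat => [v [_ Ha]]; by exists (v, p0.2).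
  split.
    apply: mono_unif; move: Wmf; rewrite /sigma_mono -Emf.
    move/walk_cat => [v [Hr _]]; move/walk_cat: Hr => [v' [Hb _]].
    by exists (p0.1, v').
  split.
    split; first by exists p0; apply: sagb.
    move=> m1 m2 /supp_sandwich [u1 [-> H1]] /supp_sandwich [u2 [-> H2]] p.
    by rewrite (key _ H1) (key _ H2).
  by split.
move=> [_ Uf].
have agbmf : forall p, sigma s t l agb p -> sigma s t l f p.
  move=> p Hp m Hm; apply/(Uf m mf Hm Hmf).
  apply/(key mg Hmg); apply: Hp; apply/supp_sandwich; by exists mg.
split; last by move=> p; split; [apply: agbmf | apply: sagb].
split; first by exists p0; apply: sh.
have tomf : forall m, supp h m -> forall p, sigma_mono s t l m p <-> sigma_mono s t l mf p.
  move=> m /supp_add [Hm|Hm] p; first exact: Uf.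
  move/supp_sandwich: Hm => [u [-> Hu]]; exact: key.
move=> m1 m2 H1 H2 p; rewrite (tomf _ H1) (tomf _ H2); done.
Qed.
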